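(* If $\frac12<p\le t\le\frac23$, then bold play is not optimal, i.e. $\pi(p,t)>p$.
   Context: Let $\beta_1,\beta_2,\ldots$ be independent Bernoulli random variables with success probability $p$. A stake sequence is a sequence $\gamma=(c_1,c_2,\ldots)$ of non-negative reals with $c_1\ge c_2\ge\cdots$ and $\sum_i c_i=1$; write $S_\gamma=\sum_i c_i\beta_i$. For $0\le p\le t\le 1$ define $\pi(p,t)=\sup\{\mathbf P(S_\gamma\ge t)\mid \gamma \text{ a stake sequence}\}$. Bold play for threshold $t$ is the stake sequence with $c_i=\frac1m$ for $i\le m$ and $c_i=0$ for $i>m$, where $m=\lfloor 1/t\rfloor$; it is optimal if it attains $\pi(p,t)$. For $t>\frac12$ bold play is $c_1=1$, with success probability $p$. *)

(* Defs.v *)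
From HB Require Import structures.
From mathcomp Require Import all_boot all_order all_algebra.
From mathcomp Require Import all_classical all_reals all_analysis.
Set Implicit Arguments. Unset Strict Implicit. Unset Printing Implicit Defensive.
Import Order.TTheory GRing.Theory Num.Theory.
Import numFieldNormedType.Exports.
Local Open Scope classical_set_scope.
Local Open Scope ring_scope.

Definition mutually_independent {d} {T : measurableType d} {R : realType}
  (P : probability T R) (X : nat -> T -> R) : Prop :=
  forall (s : seq nat) (B : nat -> set R), uniq s ->
    (forall i, measurable (B i)) ->
    P (\big[setI/setT]_(i <- s) (X i @^-1` B i)) =
    (\prod_(i <- s) P (X i @^-1` B i))%E.

(* beta_1, beta_2, ... (indexed from 0 here) are independent Bernoulli(p)
   random variables on the probability space P. *)
Definition iid_bernoulli {d} {T : measurableType d} {R : realType}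
  (P : probability T R) (p : R) (beta : nat -> T -> R) : Prop :=
  [/\ forall i, measurable_fun setT (beta i),
      forall i x, beta i x = 0 \/ beta i x = 1,
      forall i, P (beta i @^-1` [set 1]) = p%:E
    & mutually_independent P beta].

Definition stake_seq {R : realType} (c : nat -> R) : Prop :=
  [/\ forall i, 0 <= c i,
      forall i, c i.+1 <= c i
    & series c @ \oo --> (1 : R)].

Definition S_gamma {T : Type} {R : realType} (c : nat -> R) (beta : nat -> T -> R)
  (x : T) : \bar R :=
  (\sum_(0 <= i <oo) (c i * beta i x)%:E)%E.

Definition pi_opt {d} {T : measurableType d} {R : realType}
  (P : probability T R) (beta : nat -> T -> R) (t : R) : \bar R :=
  ereal_sup [set P [set x | (t%:E <= S_gamma c beta x)%E] | c in @stake_seq R].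

(* Main.v *)
Require Import Defs.
From mathcomp Require Import all_boot all_order all_algebra.
From mathcomp Require Import all_classical all_reals all_analysis.
From mathcomp Require Import ring lra.
Import Order.TTheory GRing.Theory Num.Theory.
Local Open Scope ring_scope.
Local Open Scope classical_set_scope.

Section S.
Variable R : realType.
Definition c3 : nat -> R := fun i => if (i < 3)%N then 3^-1 else 0.

Lemma c3_stake : stake_seq c3.
Proof.
split.
- by move=> i; rewrite /c3; case: ifP => // _; rewrite invr_ge0.
- move=> i; rewrite /c3; case: ifP => [h|_]; first by rewrite (ltn_trans (ltnSn i) h).
  by case: ifP => // _; rewrite invr_ge0.
- apply: (@cvg_near_cst _ R^o (1:R)); near=> n.
  have n3 : (3 <= n)%N by near: n; exists 3%N.
  rewrite /series /= (big_cat_nat (leq0n 3) n3) /=.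
  rewrite [X in _ + X]big1_seq; last first.
    by move=> i /andP[_]; rewrite mem_index_iota /c3 => /andP[h _]; rewrite ifF // leq_gtF.
  by rewrite addr0 !big_nat_recl // big_geq // /c3 /=; field.
Unshelve. all: by end_near.
Qed.
End S.

Theorem corollary17 (R : realType) (d : measure_display) (T : measurableType d)
  (P : probability T R) (beta : nat -> T -> R) (p t : R) :
  iid_bernoulli P p beta ->
  2^-1 < p -> p <= t -> t <= 2 / 3 ->
  (p%:E < pi_opt P beta t)%E.
Proof.
move=> [hm hb h1 hind] hp hpt ht.
have p1 : p < 1 by lra.
have mE : forall i (A : set R), measurable A -> measurable (beta i @^-1` A).
  by move=> i A mA; have := hm i measurableT A mA; rewrite setTI.
pose E1 i := beta i @^-1` [set (1:R)].
pose E0 i := beta i @^-1` [set (0:R)].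
have mE1 : forall i, measurable (E1 i) by move=> i; apply: mE.
have mE0 : forall i, measurable (E0 i) by move=> i; apply: mE.
have PE0 : forall i, P (E0 i) = (1 - p)%:E.
  move=> i; have -> : E0 i = ~` E1 i.
    apply/seteqP; split => x /=; rewrite /E0 /E1 /preimage /=.
      by move=> ->; lra.
    by case: (hb i x) => ->; lra.
  by rewrite probability_setC // h1.
have ind3 : forall A0 A1 A2 : set R, measurable A0 -> measurable A1 -> measurable A2 ->
  P (beta 0%N @^-1` A0 `&` (beta 1%N @^-1` A1 `&` beta 2%N @^-1` A2)) =
  (P (beta 0%N @^-1` A0) * P (beta 1%N @^-1` A1) * P (beta 2%N @^-1` A2))%E.
  move=> A0 A1 A2 m0 m1 m2.
  have := hind [:: 0%N; 1%N; 2%N]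
    (fun n => if n == 0%N then A0 else if n == 1%N then A1 else A2) erefl.
  rewrite !big_cons !big_nil /= setIT mule1 muleA => ->//.
  by move=> n; case: ifP => // _; case: ifP.
pose G1 := E1 0%N `&` (E1 1%N `&` E1 2%N).
pose G2 := E0 0%N `&` (E1 1%N `&` E1 2%N).
pose G3 := E1 0%N `&` (E0 1%N `&` E1 2%N).
pose G4 := E1 0%N `&` (E1 1%N `&` E0 2%N).
have m1 : measurable (set1 (1:R)) by exact: measurable_set1.
have m0 : measurable (set1 (0:R)) by exact: measurable_set1.
have PG1 : P G1 = (p * p * p)%:E by rewrite /G1 ind3 // !h1.
have PG2 : P G2 = ((1 - p) * p * p)%:E by rewrite /G2 ind3 // !h1 PE0.
have PG3 : P G3 = (p * (1 - p) * p)%:E by rewrite /G3 ind3 // !h1 PE0.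
have PG4 : P G4 = (p * p * (1 - p))%:E by rewrite /G4 ind3 // !h1 PE0.
have mG : forall A B C : set T, measurable A -> measurable B -> measurable C ->
  measurable (A `&` (B `&` C)).
  by move=> A B C mA mB mC; apply: measurableI => //; apply: measurableI.
have mG1 : measurable G1 by apply: mG.
have mG2 : measurable G2 by apply: mG.
have mG3 : measurable G3 by apply: mG.
have mG4 : measurable G4 by apply: mG.
have disj : forall A B : set T, (forall x, A x -> B x -> False) -> A `&` B = set0.
  by move=> A B H; apply/seteqP; split => // x [] /H.
have d1 : G1 `&` G2 = set0.
  apply: disj => x; rewrite /G1 /G2 /G3 /G4 /E1 /E0 /preimage /= => H1 H2.
  repeat match goal with H : _ /\ _ |- _ => destruct H | H : _ \/ _ |- _ => destruct H end; lra.
have d2 : (G1 `|` G2) `&` G3 = set0.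
  apply: disj => x; rewrite /G1 /G2 /G3 /G4 /E1 /E0 /preimage /= => H1 H2.
  repeat match goal with H : _ /\ _ |- _ => destruct H | H : _ \/ _ |- _ => destruct H end; lra.
have d3 : (G1 `|` G2 `|` G3) `&` G4 = set0.
  apply: disj => x; rewrite /G1 /G2 /G3 /G4 /E1 /E0 /preimage /= => H1 H2.
  repeat match goal with H : _ /\ _ |- _ => destruct H | H : _ \/ _ |- _ => destruct H end; lra.
have PU : P (G1 `|` G2 `|` G3 `|` G4) =
   (p * p * p + (1 - p) * p * p + p * (1 - p) * p + p * p * (1 - p))%:E.
  rewrite measureU //; last by apply: measurableU => //; apply: measurableU.
  rewrite measureU //; last by apply: measurableU.
  rewrite measureU //.
  by rewrite !EFinD -PG1 -PG2 -PG3 -PG4.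
have [c0 _ _] := c3_stake R.
have Sx : forall x, S_gamma (@c3 R) beta x = ((beta 0%N x + beta 1%N x + beta 2%N x) / 3)%:E.
  move=> x; rewrite /S_gamma (nneseries_split 0 3); last first.
    move=> k _; rewrite lee_fin; apply: mulr_ge0 => //.
    by case: (hb k x) => ->.
  rewrite add0n eseries0 ?adde0; last first.
    by move=> i hi _; rewrite /c3 ltnNge hi mul0r.
  rewrite !big_nat_recl // big_geq // /c3 /= adde0 -!EFinD; congr EFin; field; lra.
have ev : [set x | (t%:E <= S_gamma (@c3 R) beta x)%E] = G1 `|` G2 `|` G3 `|` G4.
  apply/seteqP; split => y; rewrite /= Sx lee_fin /G1 /G2 /G3 /G4 /E1 /E0 /preimage /=;
  case: (hb 0%N y) => ->; case: (hb 1%N y) => ->; case: (hb 2%N y) => ->; intuition lra.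
rewrite /pi_opt; apply: (lt_le_trans _ (ereal_sup_ubound _)); last first.
  by exists (@c3 R); [exact: c3_stake | reflexivity].
rewrite ev PU lte_fin.
have : 0 < p * ((2 * p - 1) * (1 - p)) by apply: mulr_gt0; [lra | apply: mulr_gt0; lra].
lra.
Qed.
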